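(* Let $\delta$ be a positive integer and let $$p_\delta(x)=\left(\frac{1+\sqrt{1-4x}}{2}\right)^{\delta+1}+\left(\frac{1-\sqrt{1-4x}}{2}\right)^{\delta+1}.$$ Then $p_\delta(x)$ is a polynomial in $x$ with constant term $1$; writing $p_\delta(x)=\sum_{i=0}^{d}c_ix^i$ with $d=\deg p_\delta$, the sequence $\zeta(\cdot,\delta)$ satisfies the linear recurrence $$\sum_{i=0}^{d}c_i\,\zeta(m-2i,\delta)=0,\quad\text{i.e.}\quad \zeta(m,\delta)=-\sum_{i=1}^{d}c_i\,\zeta(m-2i,\delta),$$ for every integer $m\ge 2d+1$. In other words, $p_\delta$ is the (reciprocal-form) characteristic polynomial of the step-$2$ linear recurrence satisfied by $\zeta(m,\delta)$.
   Context: For positive integers $m$ and $\delta$, a $\delta$-deviation set of size $m$ is a finite sequence $(\alpha_1,\dots,\alpha_\ell)$ of positive integers such that (i) $\sum_i\alpha_i=m$; (ii) $\big|\sum_i\alpha_{2i-1}-\sum_i\alpha_{2i}\big|\le 1$; (iii) $\big|\sum_{1\le i\le j}(-1)^{i-1}\alpha_i\big|\le\delta$ for every $j\ge1$; and $\zeta(m,\delta)$ is the number of $\delta$-deviation sets of size $m$. (Example: $p_3(x)=1-4x+2x^2$ corresponds to $\zeta(m,3)=4\zeta(m-2,3)-2\zeta(m-4,3)$.) *)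

(* Defs.v *)
From HB Require Import structures.
From mathcomp Require Import all_boot all_order all_algebra.
Set Implicit Arguments. Unset Strict Implicit. Unset Printing Implicit Defensive.
Import Order.TTheory GRing.Theory Num.Theory.
Local Open Scope ring_scope.

(* Alternating sum  sum_i (-1)^(i-1) alpha_i  (1-based), i.e. with 0-based
   index i the sign is (-1)^i. *)
Definition altsum (s : seq nat) : int :=
  \sum_(i < size s) (-1) ^+ i * (nth 0%N s i)%:Z.

Definition is_dev_set (m delta : nat) (s : seq nat) : bool :=
  [&& all (fun a => (0 < a)%N) s,
      sumn s == m,
      `|altsum s| <= 1
    & [forall j : 'I_(size s).+1, `|altsum (take j s)| <= delta%:Z]].

(* zeta(m, delta): number of delta-deviation sets of size m.  Such a sequence
   has length l <= m and entries <= m, so we count them as l-tuples of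
   elements of 'I_m.+1, for each l <= m. *)
Definition zeta (m delta : nat) : nat :=
  (\sum_(l < m.+1)
     #|[set t : l.-tuple 'I_m.+1 | is_dev_set m delta (map val t)]|)%N.

Definition pdelta (R : rcfType) (delta : nat) (x : R) : R :=
  ((1 + Num.sqrt (1 - 4 * x)) / 2) ^+ delta.+1
  + ((1 - Num.sqrt (1 - 4 * x)) / 2) ^+ delta.+1.

(* Main.v *)
Require Import Defs.
From HB Require Import structures.
From mathcomp Require Import all_boot all_order all_algebra.
From mathcomp Require Import zify ring lra.
Import Order.TTheory GRing.Theory Num.Theory.
Local Open Scope ring_scope.


Fixpoint valid (dl : nat) (S : int) (s : seq nat) : bool :=
  match s with
  | [::] => (`|S| <= 1) && (`|S| <= dl%:Z)
  | a :: s' => [&& (0 < a)%N, `|S| <= dl%:Z & valid dl (a%:Z - S) s']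
  end.

Lemma altsum_nil : altsum [::] = 0.
Proof. by rewrite /altsum big_ord0. Qed.

Lemma altsum_cons a s : altsum (a :: s) = a%:Z - altsum s.
Proof.
rewrite /altsum /= big_ord_recl /= expr0 mul1r -sumrN.
congr (_ + _); apply: eq_bigr => i _.
by rewrite /bump /= add0n exprS mulN1r mulNr.
Qed.

Lemma valid_spec dl S s :
  [&& all (fun a => (0 < a)%N) s, `|S - altsum s| <= 1
    & [forall j : 'I_(size s).+1, `|S - altsum (take j s)| <= dl%:Z]]
  = valid dl S s.
Proof.
elim: s S => [|a s IH] S.
  rewrite /= altsum_nil subr0; apply/idP/idP.
  - by case/andP=> -> /forallP/(_ ord0); rewrite /= ?altsum_nil ?subr0.
  - by case/andP=> -> H; apply/forallP => j; rewrite /= ?altsum_nil ?subr0.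
have E t : `|S - (a%:Z - t)| = `|a%:Z - S - t|.
  by rewrite -normrN; congr `|_|; ring.
have -> : [forall j : 'I_(size (a :: s)).+1, `|S - altsum (take j (a :: s))| <= dl%:Z]
   = (`|S| <= dl%:Z) && [forall j : 'I_(size s).+1, `|a%:Z - S - altsum (take j s)| <= dl%:Z].
  apply/forallP/andP.
  - move=> H; split.
    + by move: (H ord0); rewrite /= altsum_nil subr0.
    + by apply/forallP => j; move: (H (lift ord0 j)); rewrite lift0 /= altsum_cons E.
  - case=> H0 /forallP H [[|j] Hj] /=.
    + by rewrite altsum_nil subr0.
    + have Hj' : (j < (size s).+1)%N by [].
      by move: (H (Ordinal Hj')); rewrite /= altsum_cons E.
rewrite /= altsum_cons E -IH.
by case: (0 < a)%N; case: (all _ s); case: (`|S| <= _); case: (`|_ - altsum s| <= 1).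
Qed.

Lemma is_dev_valid m dl s : is_dev_set m dl s = (sumn s == m) && valid dl 0 s.
Proof.
rewrite /is_dev_set -valid_spec sub0r normrN.
rewrite (@eq_forallb _ (fun j : 'I_(size s).+1 => `|0 - altsum (take j s)| <= dl%:Z)
  (fun j : 'I_(size s).+1 => `|altsum (take j s)| <= dl%:Z)); last first.
  by move=> j; rewrite sub0r normrN.
by case: (all _ s); case: (sumn s == m).
Qed.



Lemma sum_tupleS (T : finType) l (F : l.+1.-tuple T -> nat) :
  (\sum_(t : l.+1.-tuple T) F t = \sum_(x : T) \sum_(t : l.-tuple T) F (cons_tuple x t))%N.
Proof.
rewrite pair_big /=.
rewrite (reindex (fun p : T * l.-tuple T => cons_tuple p.1 p.2)) /=; last first.
  exists (fun t => (thead t, behead_tuple t)) => [[x t] _|t _] /=.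
    by congr pair; apply: val_inj.
  by rewrite [in RHS](tuple_eta t); apply: val_inj.
by [].
Qed.

Lemma sum_tuple0 (T : finType) (F : 0.-tuple T -> nat) :
  (\sum_(t : 0.-tuple T) F t = F [tuple])%N.
Proof. by rewrite (big_pred1 [tuple]) // => t; apply/esym/eqP; exact: tuple0. Qed.

Definition Z dl l B S m : nat :=
  (\sum_(t : l.-tuple 'I_B) ((sumn (map val t) == m) && valid dl S (map val t)))%N.

Fixpoint Q dl f m S : nat :=
  match f with
  | 0 => ((m == 0)%N && valid dl S [::])
  | f'.+1 => ((m == 0)%N && valid dl S [::]) +
      ((`|S| <= dl%:Z)%R : nat) * \sum_(x < m.+1) (0 < x)%N * Q dl f' (m - x) (x%:Z - S)%R
  end%N.

Lemma addn_eq_sub x r m : (x + r == m)%N = (x <= m)%N && (r == m - x)%N.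
Proof.
case: (leqP x m) => h /=.
  by rewrite -[(r == m - x)%N](eqn_add2l x) (subnKC h).
by apply/negbTE/eqP => E; move: h; rewrite -E; lia.
Qed.

Lemma ZS dl l B S m :
  Z dl l.+1 B S m = (((`|S| <= dl%:Z)%R : nat) *
    \sum_(x < B) ((0 < x) && (x <= m))%N * Z dl l B (x%:Z - S)%R (m - x))%N.
Proof.
rewrite /Z sum_tupleS big_distrr /=; apply: eq_bigr => x _.
rewrite mulnA big_distrr /=; apply: eq_bigr => t _.
rewrite addn_eq_sub.
by case: (0 < x)%N; case: (x <= m)%N; case: (`|S| <= _)%R; case: (_ == _)%N; case: valid.
Qed.


Lemma Q_spec dl f m S B : (m < B)%N ->
  (\sum_(l < f.+1) Z dl l B S m = Q dl f m S)%N.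
Proof.
elim: f m S => [|f IH] m S mB.
  by rewrite big_ord1 /Z sum_tuple0 /= eq_sym.
rewrite big_ord_recl /= {1}/Z sum_tuple0 /= eq_sym; congr addn.
under eq_bigr do rewrite ZS.
rewrite -big_distrr /=; congr muln.
rewrite exchange_big /=.
rewrite (eq_bigr (fun j : 'I_B => (0 < j <= m)%N * Q dl f (m - j) (j%:Z - S)%R)%N); last first.
  by move=> j _; rewrite -big_distrr /= IH //; lia.
rewrite (big_ord_widen B (fun x => (0 < x)%N * Q dl f (m - x) (x%:Z - S)%R)%N mB).
rewrite [RHS]big_mkcond /=; apply: eq_bigr => x _.
by rewrite ltnS; case: (0 < x)%N; case: (x <= m)%N.
Qed.

Lemma Q0 dl g S : Q dl g 0 S = valid dl S [::].
Proof. by case: g => //= g; rewrite big_ord1 /= ?mul0n ?muln0 ?addn0. Qed.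

Lemma Q_stab dl f g m S : (m <= f)%N -> (m <= g)%N -> Q dl f m S = Q dl g m S.
Proof.
elim: f g m S => [|f IH] g m S.
  by rewrite leqn0 => /eqP -> _; rewrite !Q0.
case: g => [|g]; first by rewrite leqn0 => _ /eqP ->; rewrite !Q0.
move=> hf hg /=; congr addn; congr muln; apply: eq_bigr => [[x hx]] _ /=.
case: x hx => [|x] hx //=.
by rewrite (IH g) //; lia.
Qed.

Definition N dl m S := Q dl m m S.

Lemma zeta_N m dl : zeta m dl = N dl m 0.
Proof.
rewrite /zeta /N -(@Q_spec dl m m 0 m.+1 (ltnSn m)); apply: eq_bigr => l _.
rewrite /Z -sum1_card big_mkcond /=; apply: eq_bigr => t _.
by rewrite inE is_dev_valid; case: (_ && _).
Qed.

Lemma N_rec dl m S : N dl m S = (((m == 0)%N && valid dl S [::] : nat) +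
      ((`|S| <= dl%:Z)%R : nat) * \sum_(x < m.+1) (0 < x)%N * N dl (m - x) (x%:Z - S)%R)%N.
Proof.
case: m => [|m]; first by rewrite /N Q0 big_ord1 /= muln0 addn0.
rewrite /N /=; congr addn; congr muln; apply: eq_bigr => [[x hx]] _ /=.
case: x hx => [|x] hx //=.
by rewrite (@Q_stab _ m (m - x)) //; lia.
Qed.

Lemma N_out dl m S : ~~ (`|S| <= dl%:Z) -> N dl m S = 0%N.
Proof.
move=> /negbTE h; rewrite N_rec h /= mul0n addn0.
by case: (m == 0)%N => //=; rewrite h andbF.
Qed.

Lemma N_step dl n S : (`|S| <= dl%:Z)%R ->
  (N dl n.+1 S + ((n == 0) && valid dl (S - 1)%R [::]) = N dl n (1 - S)%R + N dl n (S - 1)%R)%N.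
Proof.
move=> hS.
rewrite N_rec hS /= add0n mul1n big_ord_recl /= mul0n add0n.
rewrite big_ord_recl /bump /= !mul1n subSS subn0 -addnA; congr addn.
rewrite (eq_bigr (fun j : 'I_n => N dl (n - j.+1) ((j.+1)%:Z - (S - 1))%R)); last first.
  by move=> j _; rewrite /bump /= mul1n; congr N; lia.
case hS1: (`|S - 1| <= dl%:Z)%R.
  rewrite [in RHS]N_rec hS1 mul1n addnC; congr addn; first by rewrite /= hS1.
  rewrite big_ord_recl /= mul0n add0n; apply: eq_bigr => j _.
  by rewrite /bump /= add1n mul1n.
rewrite N_out ?hS1 // !andbF addn0.
apply: big1 => j _; apply: N_out.
move: hS1 hS; lia.
Qed.



Definition wmask {R : rcfType} dl (v : int -> R) (j : int) : R :=
  if `|j| <= dl%:Z then v j else 0.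
Definition Tw {R : rcfType} dl (v : int -> R) (j : int) : R :=
  wmask dl v (j + 1) + wmask dl v (j - 1).
Definition u0 (R : rcfType) (j : int) : R := if `|j| <= 1 then 1 else 0.
Definition W (R : rcfType) dl n := iter n (@Tw R dl) (@u0 R).

Lemma valid_nil_N dl q : valid dl (- q) [::] = valid dl q [::].
Proof. by rewrite /= normrN. Qed.

Lemma N0 dl S : N dl 0 S = valid dl S [::].
Proof. by rewrite /N Q0. Qed.

Local Opaque N.
Lemma W_N (R : rcfType) dl n q :
  wmask dl (W R dl n) q + (((n == 0)%N && valid dl q [::]) : nat)%:R
  = (N dl n q)%:R + (N dl n (- q))%:R.
Proof.
elim: n q => [|n IH] q.
  rewrite !N0 /= /wmask /u0 normrN.
  by case: (`|q| <= 1); case: (`|q| <= dl%:Z) => //=; rewrite ?addr0 ?add0r.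
case hq: (`|q| <= dl%:Z); last first.
  by rewrite /wmask hq !N_out ?normrN ?hq //= add0r.
have K1 := @N_step dl n q hq.
have K2 := @N_step dl n (- q); rewrite normrN in K2; move: (K2 hq) => {}K2.
have A := IH (q + 1).
have B := IH (q - 1).
rewrite (_ : (1 - q = - (q - 1))%R) in K1; last by ring.
rewrite (_ : (1 - - q = q + 1)%R) in K2; last by ring.
rewrite (_ : (- q - 1 = - (q + 1))%R) in K2; last by ring. rewrite valid_nil_N in K2.
have K1' : (N dl n.+1 q)%:R + (((n == 0)%N && valid dl (q - 1) [::]) : nat)%:R
   = (N dl n (- (q - 1)))%:R + (N dl n (q - 1))%:R :> R by rewrite -!natrD K1.
have K2' : (N dl n.+1 (- q))%:R + (((n == 0)%N && valid dl (q + 1) [::]) : nat)%:R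
   = (N dl n (q + 1))%:R + (N dl n (- (q + 1)))%:R :> R by rewrite -!natrD K2.
have -> : wmask dl (W R dl n.+1) q = wmask dl (W R dl n) (q + 1) + wmask dl (W R dl n) (q - 1).
  by rewrite {1}/wmask hq /W iterS.
have -> : (((n.+1 == 0)%N && valid dl q [::] : nat)%:R = 0 :> R) by [].
rewrite addr0.
lra.
Qed.

Lemma W_zeta (R : rcfType) dl n : (0 < n)%N ->
  W R dl n 0 = 2 * (zeta n dl)%:R.
Proof.
move=> n0; have := W_N R dl n 0.
have h0 : (`|0:int| <= dl%:Z) = true by rewrite normr0.
rewrite /wmask h0 oppr0 -zeta_N.
case: n n0 => //= n _; rewrite addr0 => ->.
by rewrite mulr2n mulrDl mul1r.
Qed.

Transparent N.



Fixpoint Pk (R : rcfType) (k : nat) : {poly R} :=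
  match k with
  | 0 => 2%:P
  | 1 => 1
  | (k'.+1 as k1).+1 => Pk R k1 - 'X * Pk R k'
  end.

Arguments Pk : simpl never.

Lemma PkSS (R : rcfType) k : Pk R k.+2 = Pk R k.+1 - 'X * Pk R k.
Proof. by []. Qed.

Lemma Pk_coef_hi (R : rcfType) k0 i0 : (k0 < 2 * i0)%N -> (Pk R k0)`_i0 = 0.
Proof.
suff H : forall k, (forall i, (k < 2 * i)%N -> (Pk R k)`_i = 0) /\
                   (forall i, (k.+1 < 2 * i)%N -> (Pk R k.+1)`_i = 0).
  by case: (H k0) => H1 _; apply: H1.
elim=> [|k [IH1 IH2]]; split.
- by move=> [|i] //= _; rewrite coefC.
- by move=> [|i] //= _; rewrite coef1.
- exact: IH2.
- move=> [|[|i]] // hi; rewrite PkSS coefB coefXM /= IH2 ?IH1 ?subr0 //; lia.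
Qed.

Lemma Pk_coef0 (R : rcfType) k0 : (0 < k0)%N -> (Pk R k0)`_0 = 1.
Proof.
suff H : forall k, (Pk R k.+1)`_0 = 1 /\ (Pk R k.+2)`_0 = 1.
  by case: k0 => // k _; case: (H k).
elim=> [|k [IH1 IH2]]; split.
- by rewrite coef1.
- by rewrite (PkSS R 0) coefB coefXM coef1 subr0.
- exact: IH2.
- by rewrite (PkSS R k.+1) coefB coefXM IH2 subr0.
Qed.

Lemma coefXMS (R : rcfType) (p : {poly R}) i : ('X * p)`_i.+1 = p`_i.
Proof. by rewrite coefXM. Qed.

Lemma Pk_lead (R : rcfType) j :
  (Pk R (2 * j))`_j = 2 * (-1) ^+ j /\ (Pk R (2 * j).+1)`_j = (2 * j).+1%:R * (-1) ^+ j.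
Proof.
elim: j => [|j [IH1 IH2]].
  by rewrite /= coefC coef1 /= !mulr1.
have e : (2 * j.+1 = (2 * j).+2)%N by lia.
have h0 : (Pk R (2 * j).+1)`_j.+1 = 0 by apply: Pk_coef_hi; lia.
rewrite e; split.
  by rewrite PkSS coefB coefXMS h0 IH1 exprS; ring.
rewrite PkSS coefB coefXMS PkSS coefB coefXMS h0 IH1 IH2 exprS.
rewrite (_ : (2 * j).+3 = (2 * j).+1 + 2)%N; last by lia.
rewrite natrD; ring.
Qed.

Lemma Pk_horner (R : rcfType) (a b : R) k0 : a + b = 1 ->
  (Pk R k0).[a * b] = a ^+ k0 + b ^+ k0.
Proof.
move=> hab.
suff H : forall k, (Pk R k).[a * b] = a ^+ k + b ^+ k /\
                   (Pk R k.+1).[a * b] = a ^+ k.+1 + b ^+ k.+1.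
  by case: (H k0).
elim=> [|k [IH1 IH2]]; split.
- by rewrite /= hornerC expr0.
- by rewrite /= hornerC !expr1.
- exact: IH2.
- rewrite PkSS hornerD hornerN hornerM hornerX IH1 IH2.
  have -> : b = 1 - a by rewrite -hab; ring.
  rewrite !exprS; ring.
Qed.



Definition fW (R : rcfType) dl k n : R :=
  \sum_(i < k.+1) (Pk R k)`_i * W R dl (n + k - 2 * i)%N 0.

Definition psi {R : rcfType} dl (v : int -> R) (k : nat) : R :=
  wmask dl v k%:Z + wmask dl v (- k%:Z).

Lemma fW_rec (R : rcfType) dl k n : fW R dl k.+2 n = fW R dl k.+1 n.+1 - fW R dl k n.
Proof.
rewrite /fW.
rewrite (eq_bigr (fun i : 'I_k.+3 => (Pk R k.+1)`_i * W R dl (n + k.+2 - 2 * i)%N 0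
   - ('X * Pk R k)`_i * W R dl (n + k.+2 - 2 * i)%N 0)); last first.
  by move=> i _; rewrite PkSS coefB mulrBl.
rewrite sumrB; congr (_ - _).
  rewrite big_ord_recr /= (@Pk_coef_hi R k.+1 k.+2) ?mul0r ?addr0; last by lia.
  by apply: eq_bigr => i _; rewrite (_ : (n + k.+2 = n.+1 + k.+1)%N) //; lia.
rewrite big_ord_recl coefXM mul0r add0r.
rewrite big_ord_recr (_ : ('X * Pk R k)`_(bump 0 (@ord_max k.+1)) = 0); last first.
  by rewrite /bump /= coefXMS Pk_coef_hi //; lia.
rewrite /= mul0r addr0.
apply: eq_bigr => i _; rewrite /bump /= coefXMS; congr (_ * W R dl _ 0); lia.
Qed.

Lemma psiT (R : rcfType) dl (v : int -> R) k : (k.+1 <= dl)%N ->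
  psi dl (Tw dl v) k.+1 = psi dl v k.+2 + psi dl v k.
Proof.
move=> hk.
have h1 : (`|(k.+1)%:Z| <= dl%:Z) = true by lia.
have h2 : (`|- (k.+1)%:Z| <= dl%:Z) = true by lia.
rewrite /psi {1}/wmask h1 {1}/wmask h2 /Tw.
rewrite (_ : (k.+1)%:Z + 1 = (k.+2)%:Z); last by lia.
rewrite (_ : (k.+1)%:Z - 1 = (k)%:Z); last by lia.
rewrite (_ : - (k.+1)%:Z + 1 = - k%:Z); last by lia.
rewrite (_ : - (k.+1)%:Z - 1 = - (k.+2)%:Z); last by lia.
ring.
Qed.

Lemma Cheb (R : rcfType) dl k0 : (0 < dl)%N -> (k0 <= dl.+1)%N ->
  forall n, fW R dl k0 n = psi dl (W R dl n) k0.
Proof.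
move=> dl0.
suff H : forall k, ((k <= dl.+1)%N -> forall n, fW R dl k n = psi dl (W R dl n) k) /\
   ((k.+1 <= dl.+1)%N -> forall n, fW R dl k.+1 n = psi dl (W R dl n) k.+1).
  by case: (H k0).
elim=> [|k [IH1 IH2]]; split.
- move=> _ n; rewrite /fW big_ord1 /= coefC /= addn0 subn0 /psi /wmask oppr0.
  have -> : (`|0%:Z| <= dl%:Z) = true by lia.
  by rewrite mulr2n mulrDl mul1r.
- move=> _ n; rewrite /fW big_ord_recr big_ord1 /= coef1 /= coef1 /= mul0r addr0 mul1r.
  rewrite addn1 subn0 /W iterS /Tw /psi; congr (wmask _ _ _ + wmask _ _ _); lia.
- exact: IH2.
- move=> hk n; rewrite fW_rec IH2 ?IH1; try lia.
  rewrite /W iterS -/(W R dl n) psiT; last by lia.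
  ring.
Qed.



Theorem theorem2 (R : rcfType) (delta : nat) :
  (0 < delta)%N ->
  exists p : {poly R},
    (forall x : R, x <= 4^-1 -> p.[x] = pdelta delta x) /\
    p`_0 = 1 /\
    (forall m : nat, (2 * (size p).-1 + 1 <= m)%N ->
       \sum_(i < (size p).-1.+1) p`_i * (zeta (m - 2 * i) delta)%:R = 0).
Proof.
move=> d0; exists (Pk R delta.+1); split; [|split].
- move=> x hx; rewrite /pdelta.
  set s := Num.sqrt (1 - 4 * x).
  have h14 : 0 <= 1 - 4 * x by lra.
  have hs : s ^+ 2 = 1 - 4 * x by rewrite sqr_sqrtr.
  have -> : x = ((1 + s) / 2) * ((1 - s) / 2).
    have -> : ((1 + s) / 2) * ((1 - s) / 2) = (1 - s ^+ 2) / 4 by field.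
    by rewrite hs; field.
  by rewrite Pk_horner //; field.
- exact: Pk_coef0.
set p := Pk R delta.+1.
set h := (delta.+1)./2.
have hh : (odd delta.+1 + h.*2 = delta.+1)%N by rewrite odd_double_half.
have hnz : p`_h != 0.
  rewrite /p; clearbody h; case ho: (odd delta.+1) hh => /= hh.
    have -> : delta.+1 = (2 * h).+1 by lia.
    case: (Pk_lead R h) => _ ->.
    by rewrite mulf_neq0 ?pnatr_eq0 ?signr_eq0.
  have -> : delta.+1 = (2 * h)%N by lia.
  case: (Pk_lead R h) => -> _.
  by rewrite mulf_neq0 ?pnatr_eq0 ?signr_eq0.
have hsz1 : (h < size p)%N.
  by rewrite ltnNge; apply/negP => /leq_sizeP/(_ h (leqnn h)) /eqP; rewrite (negbTE hnz).
have hsz2 : (size p <= delta.+2)%N.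
  by apply/leq_sizeP => j hj; rewrite /p Pk_coef_hi //; lia.
set D := (size p).-1.
have hD : D.+1 = size p by rewrite /D prednK //; lia.
clearbody D.
move=> m hm.
have hmd : (delta.+1 <= m)%N by lia.
have := @Cheb R delta delta.+1 d0 (leqnn _) (m - delta.+1).
rewrite /psi /wmask.
have -> : (`|(delta.+1)%:Z| <= delta%:Z) = false by lia.
rewrite addr0 /fW -/p => H.
apply: (@mulfI _ 2); first by rewrite pnatr_eq0.
rewrite mulr0 mulr_sumr -[RHS]H.
rewrite hD.
rewrite (big_ord_widen delta.+2 (fun i => 2 * (p`_i * (zeta (m - 2 * i) delta)%:R)) hsz2).
rewrite big_mkcond /=.
apply: eq_bigr => i _.
case: ltnP => hi.
  rewrite (_ : (m - delta.+1 + delta.+1 - 2 * i = m - 2 * i)%N); last by lia.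
  rewrite W_zeta; last first.
    have hiD : (i <= D)%N by rewrite -ltnS hD.
    move: hiD hm; clear; lia.
  ring.
by rewrite nth_default // mul0r.
Qed.
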